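(* Let $p$ be an odd prime and $r\geq 2$ an integer with $p\nmid r$. Let $S$ be the smallest set of positive integers such that (a) $r\in S$; (b) $n\in S$ whenever $n^{p-1}\in S$; (c) $(n+p)^{p-1}\in S$ whenever $n\in S$. Then $S=\{n\geq 2: n\not\equiv 0\pmod p\}$.
   Context: ''Smallest'' means contained in every set of positive integers satisfying (a), (b), (c). *)

(* Defs.v *)
From mathcomp Require Import all_boot.
Set Implicit Arguments. Unset Strict Implicit. Unset Printing Implicit Defensive.

Definition admissible (p r : nat) (T : nat -> Prop) : Prop :=
  (forall n, T n -> 0 < n) /\
  T r /\
  (forall n, T (n ^ p.-1) -> T n) /\
  (forall n, T n -> T ((n + p) ^ p.-1)).

Definition smallestS (p r : nat) (n : nat) : Prop :=
  forall T, admissible p r T -> T n.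

(* Main.v *)
Require Import Defs.
From mathcomp Require Import all_boot.
From mathcomp Require Import cyclic.
From mathcomp Require Import zify.

Lemma ferm p m : prime p -> ~~ (p %| m) -> m ^ p.-1 %% p = 1.
Proof.
move=> pr ndv; rewrite -(totient_prime pr) Euler_exp_totient.
  by rewrite modn_small // prime_gt1.
by rewrite coprime_sym prime_coprime.
Qed.

Lemma iter_root p T m j : (forall n, T (n ^ p.-1) -> T n) ->
  T (m ^ ((p.-1) ^ j)) -> T m.
Proof.
move=> hb; elim: j => [|j IH]; first by rewrite expn0 expn1.
by rewrite expnSr expnM => /hb /IH.
Qed.

Theorem lemma18 (p r : nat) :
  prime p -> odd p -> 2 <= r -> ~~ (p %| r) ->
  forall n : nat, smallestS p r n <-> (2 <= n /\ n %% p != 0).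
Proof.
move=> pr op r2 ndr n; have p2 := odd_prime_gt2 op pr.
have pm : 1 < p.-1 by move: p2; case: (p) => [|[|[|q]]].
split.
- move=> hS; apply: (hS (fun n => 2 <= n /\ n %% p != 0)).
  split; first by move=> k [] ? _; lia.
  split; first by split=> //; rewrite -/(dvdn p r).
  split.
  + move=> k [h1 h2]; split.
      case: k h1 {h2} => [|[|k]] //; first by rewrite exp0n //; lia.
      by rewrite exp1n.
    move: h2; apply: contra => dk.
    rewrite -/(dvdn p (k ^ p.-1)) Euclid_dvdX // (_ : p %| k) //=; lia.
  + move=> k [h1 h2]; split.
      apply: leq_trans (_ : k + p <= _); first lia.
      by rewrite -{1}(expn1 (k+p)) leq_pexp2l; lia.
    rewrite -/(dvdn p _) Euclid_dvdX // dvdn_addl ?dvdnn //.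
    by rewrite (negbTE (h2 : ~~ (p %| k))).
- move=> [n2 nd] T [hpos [hr [hb hc]]].
  have hplus : forall k, T k -> T (k + p) by move=> k /hc /hb.
  have [a Ta a1] : exists2 a, T a & a %% p = 1.
    exists ((r + p) ^ p.-1); first exact: hc.
    by apply: ferm => //; rewrite dvdn_addl ?dvdnn.
  have Tak : forall k, T (a + k * p).
    elim=> [|k IH]; first by rewrite addn0.
    have -> : a + k.+1 * p = (a + k * p) + p by rewrite mulSn; lia.
    exact: hplus.
  have ndn : ~~ (p %| n) by rewrite /dvdn.
  apply: (@iter_root p T n a) => //.
  have apos : 0 < a by apply: hpos.
  have ea : (p.-1) ^ a = (p.-1) * (p.-1) ^ a.-1 by rewrite -expnS prednK.
  have N1 : n ^ (p.-1 ^ a) %% p = 1 by rewrite ea expnM -modnXm ferm // exp1n modn_small // prime_gt1.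
  have aN : a <= n ^ (p.-1 ^ a).
    exact: leq_trans (ltnW (ltn_expl a pm)) (ltnW (ltn_expl (p.-1 ^ a) n2)).
  have dv : p %| n ^ (p.-1 ^ a) - a by rewrite -eqn_mod_dvd // N1 a1.
  have -> : n ^ (p.-1 ^ a) = a + ((n ^ (p.-1 ^ a) - a) %/ p) * p.
    by rewrite (divnK dv) subnKC.
  exact: Tak.
Qed.
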